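(* Let $p\geq 2$ and let $T$ be the (geometric realization of the) regular rooted tree in which the root has valence $p$ and every other vertex has valence $p+1$, equipped with its usual topology. Let $\mathcal{D}_T$ be the embedded wire diffeology on $T$. Then the D-topology of the diffeological space $(T,\mathcal{D}_T)$ coincides with the usual topology of $T$.
   Context: Fix a finite alphabet $A$ with $|A|=p\geq 2$. The vertices of $T$ are the finite words over $A$ (the root is the empty word); two vertices are joined by an edge iff they have the form $a_1\dots a_n$ and $a_1\dots a_na_{n+1}$. As a topological space, $T$ is the 1-dimensional CW complex obtained by realizing each edge as a copy of $[0,1]$ glued at its endpoint vertices, with its usual (CW) topology. A diffeology on a set $X$ is a collection of maps $U\to X$ (''plots''), $U$ ranging over open subsets of all $\mathbb{R}^n$, containing all constant maps, closed under precomposition with smooth maps between open subsets of Euclidean spaces, and satisfying the sheaf condition (a map that is locally a plot is a plot). The diffeology generated by a set $\mathcal{A}$ of maps into $X$ is the smallest diffeology containing $\mathcal{A}$; its plots are the maps $f:V\to X$ such that $V$ has an open cover on each member of which $f$ is either constant or factors as $g\circ h$ with $g\in\mathcal{A}$ and $h$ smooth. The embedded wire diffeology $\mathcal{D}_T$ is the diffeology on $T$ generated by all maps $\gamma:\mathbb{R}\to T$ that are injective, continuous, and homeomorphisms onto their images. The D-topology of a diffeological space $X$ is the topology in which $S\subseteq X$ is open iff $P^{-1}(S)$ is open for every plot $P$ of $X$. *)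

(* Defs.v *)
From HB Require Import structures.
From mathcomp Require Import all_boot all_order all_algebra.
From mathcomp Require Import all_classical all_reals all_analysis.
Set Implicit Arguments. Unset Strict Implicit. Unset Printing Implicit Defensive.
Import Order.TTheory GRing.Theory Num.Theory.
Import numFieldNormedType.Exports.
Local Open Scope classical_set_scope.
Local Open Scope ring_scope.

Section Tree.
Variables (R : realType) (A : finType).

(* Raw points of the geometric realization of the rooted tree over A.
   [Root] is the root vertex; [Pt w a t] (0 < t <= 1) is the point at
   parameter t on the edge joining the vertex w to the vertex rcons w a
   (t = 1 is the vertex rcons w a).  Each point has exactly one such
   representation. *)
Inductive tpt := Root | Pt of seq A & A & R.

Definition tvalid (x : tpt) : bool :=
  match x with Root => true | Pt _ _ t => (0 < t) && (t <= 1) end.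

Definition tree := {x : tpt | tvalid x}.

Definition troot : tree := exist (fun x => tvalid x) Root isT.

Definition tvertex (w : seq A) : tree :=
  match rev w with
  | [::] => troot
  | b :: ru => insubd troot (Pt (rev ru) b 1)
  end.

(* characteristic map [0,1] -> T of the edge from w to rcons w a
   (values outside [0,1] are irrelevant) *)
Definition edge_map (w : seq A) (a : A) (t : R) : tree :=
  if 0 < t then insubd (tvertex (rcons w a)) (Pt w a t) else tvertex w.

(* The usual (CW / weak) topology of T: U is open iff its preimage under
   each characteristic map of a closed edge is open in [0,1]. *)
Definition tree_open (U : set tree) : Prop :=
  forall (w : seq A) (a : A) (s : R), 0 <= s <= 1 -> U (edge_map w a s) ->
    exists2 e : R, 0 < e &
      forall s' : R, 0 <= s' <= 1 -> `|s' - s| < e -> U (edge_map w a s').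

Definition tree_continuous (g : R -> tree) : Prop :=
  forall U : set tree, tree_open U -> open (g @^-1` U).

Definition embedded_wire (g : R -> tree) : Prop :=
  [/\ injective g, tree_continuous g &
      (* homeomorphism onto its image (with the subspace topology) *)
      forall O : set R, open O ->
        exists2 U : set tree, tree_open U & g @` O = U `&` range g].

End Tree.

Section Diffeology.
Variable R : realType.

Fixpoint iter_dder (n : nat) (vs : seq 'rV[R]_n) (f : 'rV[R]_n -> R)
  : 'rV[R]_n -> R :=
  match vs with
  | [::] => f
  | v :: vs' => fun x => 'D_v (iter_dder vs' f) x
  end.

Definition smooth_on (n : nat) (W : set 'rV[R]_n) (f : 'rV[R]_n -> R) : Prop :=
  forall vs : seq 'rV[R]_n,
    (forall x, W x -> {for x, continuous (iter_dder vs f)}) /\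
    (forall (v x : 'rV[R]_n), W x -> derivable (iter_dder vs f) x v).

(* Plots of the diffeology generated by a family G of maps R -> X:
   P : U -> X (U open in R^n; values of P outside U are irrelevant) is a plot
   iff U has an open cover on each member of which P is constant or of the
   form g o h with g in G and h smooth. *)
Definition gen_plot (X : Type) (G : set (R -> X)) (n : nat)
    (U : set 'rV[R]_n) (P : 'rV[R]_n -> X) : Prop :=
  forall x, U x -> exists W : set 'rV[R]_n,
    [/\ open W, W `<=` U, W x &
      (exists c : X, forall y, W y -> P y = c) \/
      (exists (g : R -> X) (h : 'rV[R]_n -> R),
         [/\ G g, smooth_on W h & forall y, W y -> P y = g (h y)])].

Definition D_open (X : Type)
    (plot : forall n : nat, set 'rV[R]_n -> ('rV[R]_n -> X) -> Prop)
    (S : set X) : Prop :=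
  forall (n : nat) (U : set 'rV[R]_n) (P : 'rV[R]_n -> X),
    open U -> plot n U P -> open (U `&` P @^-1` S).

End Diffeology.

Definition wire_plot (R : realType) (A : finType) :=
  @gen_plot R (tree R A) (@embedded_wire R A).

(* Main.v *)
Require Import Defs.
From HB Require Import structures.
From mathcomp Require Import all_boot all_order all_algebra.
From mathcomp Require Import all_classical all_reals all_analysis.
From mathcomp Require Import zify.
From mathcomp Require Import ring lra.
Import Order.TTheory GRing.Theory Num.Theory.
Import numFieldNormedType.Exports.
Local Open Scope classical_set_scope.
Section Helpers.
Local Open Scope ring_scope.

Lemma D_coord (R : realType) (v x : 'rV[R]_1) :
  'D_v (fun y : 'rV[R]_1 => y ord0 ord0) x = v ord0 ord0.
Proof.
have @f : {linear 'rV[R]_1 -> R}.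
  by exists (fun N : 'rV[R]_1 => N ord0 ord0); do 2![eexists]; do ?[constructor];
     rewrite ?mxE// => ? *; rewrite ?mxE//; move=> ?; rewrite !mxE.
rewrite (_ : (fun _ => _) = f) //.
rewrite deriveE; last exact/linear_differentiable/coord_continuous.
by rewrite diff_lin //; exact: coord_continuous.
Qed.

Lemma smooth_coord (R : realType) :
  smooth_on setT (fun y : 'rV[R]_1 => y ord0 ord0).
Proof.
set h := fun y : 'rV[R]_1 => y ord0 ord0.
have key : forall vs, iter_dder vs h = h \/ exists c, iter_dder vs h = cst c.
  elim => [|v vs [IH|[c IH]]] /=; first by left.
    right; exists (v ord0 ord0); apply/funext => x; rewrite IH; exact: D_coord.
  right; exists 0; apply/funext => x; rewrite IH; exact: derive_cst.
move=> vs; case: (key vs) => [->|[c ->]]; split.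
- by move=> x _; exact: coord_continuous.
- by move=> v x _; exact/diff_derivable/differentiable_coord.
- by move=> x _; exact: cst_continuous.
- by move=> v x _; exact: derivable_cst.
Qed.

Section TreeLemmas.
Lemma edge_map_val {R : realType} {A : finType} (w : seq A) a (t : R) :
  0 < t <= 1 -> val (edge_map w a t) = Pt w a t.
Proof. by move=> /andP[t0 t1]; rewrite /edge_map ifT // insubdK //; apply/andP. Qed.

Lemma tvertex_rcons {R : realType} {A : finType} (w : seq A) a :
  val (tvertex R (rcons w a)) = Pt w a 1.
Proof. by rewrite /tvertex rev_rcons /= revK insubdK //; apply/andP; rewrite ltr01 lexx. Qed.

Lemma edge_map0 {R : realType} {A : finType} (w : seq A) a :
  edge_map w a (0 : R) = tvertex R w.
Proof. by rewrite /edge_map ltxx. Qed.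

Lemma edge_map1 {R : realType} {A : finType} (w : seq A) a :
  edge_map w a (1 : R) = tvertex R (rcons w a).
Proof. by apply: val_inj; rewrite edge_map_val ?ltr01 ?lexx // tvertex_rcons. Qed.

Lemma tvertex_cases {R : realType} {A : finType} (v : seq A) :
  (v = [::] /\ val (tvertex R v) = Root R A) \/
  exists v' c, v = rcons v' c /\ val (tvertex R v) = Pt v' c 1.
Proof.
case/lastP: v => [|v' c]; first by left.
by right; exists v', c; rewrite tvertex_rcons.
Qed.

Lemma rcons_nseq (A : Type) m (c : A) : rcons (nseq m c) c = nseq m.+1 c.
Proof. by elim: m => //= m ->. Qed.
End TreeLemmas.

Section Line.
Definition ray {R : realType} {A : finType} (w : seq A) (c : A) (t : R) : tree R A :=
  edge_map (w ++ nseq (Num.truncn t) c) c (t - (Num.truncn t)%:R).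

Definition line {R : realType} {A : finType} (w : seq A) (a b : A) (t : R) :=
  if 0 <= t then ray w a t else ray w b (- t).

Lemma ray_chart {R : realType} {A : finType} (w : seq A) c m (t : R) :
  m%:R <= t <= m.+1%:R -> ray w c t = edge_map (w ++ nseq m c) c (t - m%:R).
Proof.
move=> /andP[mt tm]; rewrite /ray.
have [lt|ge] := ltP t m.+1%:R.
  by rewrite (@truncn_def _ t m) // mt lt.
have -> : t = m.+1%:R by apply/le_anti; rewrite tm ge.
rewrite natrK subrr edge_map0 -natr1 addrC addKr edge_map1.
by rewrite -cats1 -catA cats1 rcons_nseq.
Qed.

Lemma ray0 {R : realType} {A : finType} (w : seq A) c : ray w c (0 : R) = tvertex R w.
Proof. by rewrite /ray truncn0 subr0 cats0 edge_map0. Qed.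

Lemma ray_cases {R : realType} {A : finType} (w : seq A) c (u : R) : 0 <= u ->
  (0 < u - (Num.truncn u)%:R /\ val (ray w c u) = Pt (w ++ nseq (Num.truncn u) c) c (u - (Num.truncn u)%:R))
  \/ (u = (Num.truncn u)%:R /\ ray w c u = tvertex R (w ++ nseq (Num.truncn u) c)).
Proof.
move=> u0; have /andP[mu um] := truncn_itv u0.
have [e|ne] := eqVneq u (Num.truncn u)%:R.
  by right; split => //; rewrite /ray -e subrr edge_map0.
left; have pos : 0 < u - (Num.truncn u)%:R.
  by rewrite subr_gt0 lt_neqAle mu eq_sym ne.
split => //; rewrite /ray edge_map_val // pos /=.
by rewrite lerBlDl natr1 ltW.
Qed.
End Line.

Definition craw {R : realType} {A : finType} (w : seq A) (a b : A) (x : tpt R A) : R :=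
  match x with
  | Root => 0
  | Pt w' c s =>
    if (c == a) && (w' == w ++ nseq (size w' - size w) a) then (size w' - size w)%:R + s
    else if (c == b) && (w' == w ++ nseq (size w' - size w) b)
         then - ((size w' - size w)%:R + s) else 0
  end.

Lemma craw_Pt {R : realType} {A : finType} (w : seq A) a b c m (s : R) :
  a != b -> (c == a) || (c == b) ->
  craw w a b (Pt (w ++ nseq m c) c s) = if c == a then m%:R + s else - (m%:R + s).
Proof.
move=> ab cab; rewrite /= size_cat size_nseq addKn.
have [ca|ca] := eqVneq c a; first by rewrite ca eqxx.
by move: cab; rewrite (negbTE ca) /= => /eqP cb; rewrite cb !eqxx.
Qed.

Lemma craw_vertex {R : realType} {A : finType} (w : seq A) a b c m :
  a != b -> (c == a) || (c == b) ->
  craw w a b (val (tvertex R (w ++ nseq m c))) = if c == a then m%:R else - m%:R.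
Proof.
move=> ab cab; case: m => [|k].
  rewrite cats0; case: (tvertex_cases (R:=R) w) => [[_ ->]|[v' [c' [-> ->]]]].
    by case: ifP; rewrite ?oppr0.
  rewrite /craw; have -> : (size v' - size (rcons v' c'))%N = 0%N.
    by apply/eqP; rewrite subn_eq0 size_rcons.
  have nv : (v' == rcons v' c') = false.
    by apply/negbTE/eqP => /(congr1 size); rewrite size_rcons; lia.
  rewrite !cats0 nv.
  by rewrite /= !andbF; case: ifP; rewrite ?oppr0.
by rewrite -rcons_nseq -rcons_cat tvertex_rcons craw_Pt // natr1.
Qed.

Lemma craw_line {R : realType} {A : finType} (w : seq A) a b (t : R) :
  a != b -> craw w a b (val (line w a b t)) = t.
Proof.
move=> ab; rewrite /line; case: ifPn => [t0|].
  case: (ray_cases w a t t0) => [[_ ->]|[e ->]].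
    by rewrite craw_Pt ?eqxx // addrC subrK.
  by rewrite craw_vertex ?eqxx.
rewrite -ltNge => t0; have t0' : 0 <= - t by rewrite oppr_ge0 ltW.
have ba : (b == a) = false by rewrite eq_sym (negbTE ab).
case: (ray_cases w b (- t) t0') => [[_ ->]|[e ->]].
  by rewrite craw_Pt ?eqxx ?orbT // ba addrC subrK opprK.
by rewrite craw_vertex ?eqxx ?orbT // ba -e opprK.
Qed.

Lemma line_inj {R : realType} {A : finType} (w : seq A) a b :
  a != b -> injective (@line R A w a b).
Proof.
by move=> ab t1 t2 e; rewrite -(craw_line w a b t1 ab) -(craw_line w a b t2 ab) e.
Qed.

Lemma ray_chart_nbhs {R : realType} {A : finType} (w : seq A) c (U : set (tree R A))
    j (t : R) : tree_open U -> j%:R <= t <= j.+1%:R -> U (ray w c t) ->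
  exists2 e : R, 0 < e & forall t', j%:R <= t' <= j.+1%:R -> `|t' - t| < e ->
    U (ray w c t').
Proof.
move=> oU jt Ut; rewrite (ray_chart _ _ _ _ jt) in Ut.
have bnd : forall x : R, j%:R <= x <= j.+1%:R -> 0 <= x - j%:R <= 1.
  by move=> x /andP[h1 h2]; rewrite subr_ge0 h1 lerBlDl natr1.
have [e e0 H] := oU _ _ _ (bnd _ jt) Ut.
exists e => // t' jt' d; rewrite (ray_chart _ _ _ _ jt'); apply: H; first exact: bnd.
by rewrite opprB addrA subrK.
Qed.

Lemma ray_cont {R : realType} {A : finType} (w : seq A) c (U : set (tree R A))
    (t : R) : tree_open U -> 0 <= t -> U (ray w c t) ->
  exists2 e : R, 0 < e & forall t', 0 <= t' -> `|t' - t| < e -> U (ray w c t').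
Proof.
move=> oU t0 Ut.
have /andP[mt tm] := truncn_itv t0.
move: (Num.truncn t) mt tm => m mt tm.
have [e1 e10 H1] := ray_chart_nbhs w c U m t oU (introT andP (conj mt (ltW tm))) Ut.
have tm' : t < m%:R + 1 by rewrite natr1.
case: (ltP m%:R t) => [mlt|tle].
  exists (Order.min e1 (Order.min (t - m%:R) (m%:R + 1 - t))).
    by rewrite !lt_min e10 !subr_gt0 mlt tm'.
  move=> t' t'0; rewrite !lt_min => /andP[d1 /andP[d2 d3]].
  apply: H1 => //; move: d2 d3; rewrite !ltr_distl => /andP[a1 a2] /andP[a3 a4].
  rewrite -natr1; apply/andP; split; lra.
have tE : t = m%:R by apply/le_anti; rewrite tle mt.
case: m mt tm tm' H1 tle tE => [|k] mt tm tm' H1 tle tE.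
  exists (Order.min e1 1); first by rewrite lt_min e10 ltr01.
  move=> t' t'0; rewrite !lt_min => /andP[d1 d2].
  apply: H1 => //; move: d2; rewrite ltr_distl tE => /andP[a1 a2].
  rewrite -natr1; apply/andP; split; lra.
have kt : k%:R <= t <= k.+1%:R by rewrite tE -natr1 lexx andbT lerDl ler01.
have [e2 e20 H2] := ray_chart_nbhs w c U k t oU kt Ut.
exists (Order.min e1 (Order.min e2 1)); first by rewrite !lt_min e10 e20 ltr01.
move=> t' t'0; rewrite !lt_min => /andP[d1 /andP[d2 d3]].
move: (d3); rewrite ltr_distl tE -natr1 => /andP[a1 a2].
case: (leP (k%:R + 1) t') => h.
  apply: H1 => //; rewrite -!natr1; apply/andP; split; lra.
apply: H2 => //; rewrite -natr1; apply/andP; split; lra.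
Qed.

Lemma line_pos {R : realType} {A : finType} (w : seq A) a b (x : R) :
  0 <= x -> line w a b x = ray w a x.
Proof. by rewrite /line => ->. Qed.

Lemma line_neg {R : realType} {A : finType} (w : seq A) a b (x : R) :
  0 <= x -> line w a b (- x) = ray w b x.
Proof.
rewrite /line => x0; case: ifPn => [h|]; last by rewrite opprK.
have -> : x = 0 by apply/le_anti; rewrite x0 -oppr_ge0 h.
by rewrite oppr0 !ray0.
Qed.

Lemma line_cont {R : realType} {A : finType} (w : seq A) a b (U : set (tree R A))
    (t : R) : tree_open U -> U (line w a b t) ->
  exists2 e : R, 0 < e & forall t', `|t' - t| < e -> U (line w a b t').
Proof.
move=> oU Ut.
have dneg : forall x y : R, `|- x - - y| = `|x - y|.
  by move=> x y; rewrite -normrN opprD !opprK.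
case: (ltgtP t 0) => [tn|tp|t0].
- have t0' : 0 <= - t by rewrite oppr_ge0 ltW.
  rewrite -[t]opprK line_neg // in Ut.
  have [e e0 H] := ray_cont w b U (- t) oU t0' Ut.
  exists (Order.min e (- t)); first by rewrite lt_min e0 oppr_gt0 tn.
  move=> t'; rewrite lt_min => /andP[d1 d2].
  have t'n : t' < 0 by move: d2; rewrite ltr_distl => /andP[h1 h2]; lra.
  rewrite -[t']opprK line_neg ?oppr_ge0 ?ltW //; apply: H.
    by rewrite oppr_ge0 ltW.
  by rewrite dneg.
- rewrite line_pos ?ltW // in Ut.
  have [e e0 H] := ray_cont w a U t oU (ltW tp) Ut.
  exists (Order.min e t); first by rewrite lt_min e0 tp.
  move=> t'; rewrite lt_min => /andP[d1 d2].
  have t'p : 0 < t' by move: d2; rewrite ltr_distl => /andP[h1 h2]; lra.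
  by rewrite line_pos ?ltW //; apply: H => //; rewrite ltW.
- rewrite t0 line_pos // in Ut.
  have Ut' : U (ray w b 0) by rewrite ray0 -(ray0 w a).
  have [ea ea0 Ha] := ray_cont w a U 0 oU (lexx _) Ut.
  have [eb eb0 Hb] := ray_cont w b U 0 oU (lexx _) Ut'.
  exists (Order.min ea eb); first by rewrite lt_min ea0 eb0.
  move=> t'; rewrite lt_min t0 => /andP[d1 d2].
  case: (leP 0 t') => h.
    by rewrite line_pos //; apply: Ha.
  rewrite -[t']opprK line_neg ?oppr_ge0 ?ltW //; apply: Hb.
    by rewrite oppr_ge0 ltW.
  by rewrite -(oppr0) dneg.
Qed.

Lemma open_of_balls {R : realType} (O : set R) :
  (forall x, O x -> exists2 e : R, 0 < e & forall y, `|y - x| < e -> O y) -> open O.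
Proof.
move=> H; rewrite openE => x Ox; have [e e0 He] := H x Ox.
apply/nbhs_ballP; exists e => // y; rewrite /ball /= => d.
by apply: He; rewrite distrC.
Qed.

Lemma balls_of_open {R : realType} (O : set R) x : open O -> O x ->
  exists2 e : R, 0 < e & forall y, `|y - x| < e -> O y.
Proof.
rewrite openE => oO Ox; have /nbhs_ballP[e e0 He] := oO x Ox.
by exists e => // y d; apply: He; rewrite /ball /= distrC.
Qed.

Lemma ray_on_edge {R : realType} {A : finType} (w : seq A) c (u : R) w' a' (s' : R) :
  0 <= u -> s' < 1 -> val (ray w c u) = Pt w' a' s' ->
  exists m, w' = w ++ nseq m c /\ a' = c.
Proof.
move=> u0 s1; case: (ray_cases w c u u0) => [[_ ->]|[_ ->]].
  by case=> <- <- _; eexists.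
case: (tvertex_cases (R:=R) (w ++ nseq (Num.truncn u) c)) => [[_ ->]//|[v' [c' [_ ->]]]].
by case=> _ _ e; move: s1; rewrite -e ltxx.
Qed.

Lemma on_line {R : realType} {A : finType} (w : seq A) a b w' a' (s' t : R) :
  0 < s' < 1 -> line w a b t = edge_map w' a' s' ->
  (exists m, w' = w ++ nseq m a /\ a' = a) \/ (exists m, w' = w ++ nseq m b /\ a' = b).
Proof.
move=> /andP[s0 s1] ht.
have hv : val (line w a b t) = Pt w' a' s' by rewrite ht edge_map_val // s0 ltW.
move: hv; rewrite /line; case: ifPn => [t0|].
  by move=> /(ray_on_edge _ _ _ _ _ _ t0 s1); left.
rewrite -ltNge => tn.
by move=> /(ray_on_edge _ _ _ _ _ _ _ s1); rewrite oppr_ge0 ltW // => /(_ isT); right.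
Qed.

Lemma edge_on_line_a {R : realType} {A : finType} (w : seq A) a b m (s : R) :
  0 <= s <= 1 -> edge_map (w ++ nseq m a) a s = line w a b (m%:R + s).
Proof.
move=> /andP[s0 s1]; rewrite line_pos ?addr_ge0 // (ray_chart _ _ m).
  by rewrite addrC addKr.
by rewrite lerDl s0 -natr1 lerD2l.
Qed.

Lemma edge_on_line_b {R : realType} {A : finType} (w : seq A) a b m (s : R) :
  0 <= s <= 1 -> edge_map (w ++ nseq m b) b s = line w a b (- (m%:R + s)).
Proof.
move=> /andP[s0 s1]; rewrite line_neg ?addr_ge0 // (ray_chart _ _ m).
  by rewrite addrC addKr.
by rewrite lerDl s0 -natr1 lerD2l.
Qed.

Lemma line_embedded {R : realType} {A : finType} (w : seq A) a b :
  a != b -> embedded_wire (@line R A w a b).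
Proof.
move=> ab; split.
- exact: line_inj.
- move=> U oU; apply: open_of_balls => x Ux.
  exact: (line_cont w a b U x oU Ux).
move=> O oO.
exists (fun x => (exists2 t, O t & line w a b t = x) \/ ~ (exists t, line w a b t = x)).
  move=> w' a' s /andP[s0 s1] Us.
  have onO : forall t, line w a b t = edge_map w' a' s -> O t.
    move=> t ht; case: Us => [[t' Ot' e]|nr]; last by exfalso; apply: nr; exists t.
    by rewrite -ht in e; rewrite -(line_inj w a b ab _ _ e).
  case: (pselect (exists m, w' = w ++ nseq m a /\ a' = a)) => [[m [hw ha]]|na]; first subst w' a'.
    have [e e0 He] := balls_of_open _ (m%:R + s) oO (onO _ (esym (edge_on_line_a w a b m s (introT andP (conj s0 s1))))).
    exists e => // s' /andP[s'0 s'1] d.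
    rewrite (edge_on_line_a w a b) ?s'0 //; left; exists (m%:R + s') => //.
    by apply: He; have -> : m%:R + s' - (m%:R + s) = s' - s by ring.
  case: (pselect (exists m, w' = w ++ nseq m b /\ a' = b)) => [[m [hw ha]]|nb]; first subst w' a'.
    have [e e0 He] := balls_of_open _ (- (m%:R + s)) oO (onO _ (esym (edge_on_line_b w a b m s (introT andP (conj s0 s1))))).
    exists e => // s' /andP[s'0 s'1] d.
    rewrite (edge_on_line_b w a b) ?s'0 //; left; exists (- (m%:R + s')) => //.
    have E : - (m%:R + s') - - (m%:R + s) = - (s' - s) by ring.
    by apply: He; rewrite E normrN.
  have off : forall s' : R, 0 < s' < 1 -> ~ exists t, line w a b t = edge_map w' a' s'.
    by move=> s' hs' [t ht]; case: (on_line w a b w' a' s' t hs' ht).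
  have key : forall e : R, (forall s', 0 <= s' <= 1 -> `|s' - s| < e -> s' != s -> 0 < s' < 1) ->
      forall s', 0 <= s' <= 1 -> `|s' - s| < e ->
      (fun x => (exists2 t, O t & line w a b t = x) \/ ~ (exists t, line w a b t = x))
        (edge_map w' a' s').
    move=> e He s' hs' d; have [->//|ne] := eqVneq s' s.
    by right; apply: off; apply: He.
  have [s_0|sn0] := eqVneq s 0.
    exists 1; first exact: ltr01.
    apply: key => s' /andP[h1 h2]; rewrite s_0 subr0 ger0_norm // => h3 h4.
    by rewrite h3 lt_neqAle eq_sym h4 h1.
  have [s_1|sn1] := eqVneq s 1.
    exists 1; first exact: ltr01.
    apply: key => s' /andP[h1 h2]; rewrite s_1 ltr_distl => /andP[h3 h4] h5.
    apply/andP; split; first lra.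
    by rewrite lt_neqAle h2 andbT; exact: h5.
  have sp : 0 < s by rewrite lt_neqAle eq_sym sn0 s0.
  have sl : s < 1 by rewrite lt_neqAle sn1 s1.
  exists (Order.min s (1 - s)); first by rewrite lt_min sp subr_gt0 sl.
  apply: key => s' /andP[h1 h2]; rewrite lt_min !ltr_distl => /andP[/andP[h3 h4] /andP[h5 h6]] _.
  apply/andP; split; lra.
apply/seteqP; split.
  by move=> x [t Ot <-]; split; [left; exists t | exists t].
move=> x [[[t Ot <-]|nr] [t2 _ e2]]; first by exists t.
by exfalso; apply: nr; exists t2.
Qed.
End Helpers.

Theorem mainTheorem1 (R : realType) (A : finType) (hA : 1 < #|A|)
    (S : set (tree R A)) :
  D_open (@wire_plot R A) S <-> tree_open S.
Proof.
Local Open Scope ring_scope.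
split.
- move=> HD w a0 s hs Ss.
  have [b ab] : exists b, a0 != b.
    case: (pickP (predC1 a0)) => [b hb|h]; first by exists b; rewrite eq_sym.
    by have := eq_card0 h; rewrite cardC1; move: hA; clear; lia.
  pose P := fun y : 'rV[R]_1 => line w a0 b (y ord0 ord0).
  have plotP : wire_plot (n:=1) setT P.
    move=> x _; exists setT; split => //; first exact: openT.
    right; exists (line w a0 b), (fun y : 'rV[R]_1 => y ord0 ord0); split => //.
      exact: line_embedded.
    exact: smooth_coord.
  have oS := HD 1%N setT P openT plotP.
  have eline : forall s' : R, 0 <= s' <= 1 -> edge_map w a0 s' = line w a0 b s'.
    by move=> s' hs'; rewrite -[w in edge_map w]cats0 (edge_on_line_a w a0 b 0 s') // add0r.
  have cE : forall (a : R) i j, (const_mx a : 'rV[R]_1) i j = a.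
    by move=> *; rewrite /const_mx mxE.
  pose x0 : 'rV[R]_1 := const_mx s.
  have Px0 : (setT `&` P @^-1` S) x0 by split => //; rewrite /preimage /= /P /x0 /const_mx mxE -eline.
  move: oS; rewrite openE => /(_ x0 Px0) /nbhs_ballP [e e0 He].
  exists e => // s' hs' d.
  have : ball x0 e (const_mx s' : 'rV[R]_1).
    split => // i j; rewrite /x0 /const_mx !mxE /ball /= distrC //.
  move=> /He [_]; rewrite /preimage /= /P /const_mx mxE -eline //.
- move=> oS n U P oU plotP; rewrite openE => x [Ux PxS].
  have [W [oW WU Wx [[c Pc]|[g [h [gw hs Ph]]]]]] := plotP x Ux.
    apply: (filterS _ (open_nbhs_nbhs (conj oW Wx))) => y Wy; split; first exact: WU.
    by rewrite /= Pc // -(Pc x Wx).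
  have [_ gc _] := gw.
  have ogS := gc S oS.
  have hc : {for x, continuous h} := (hs [::]).1 x Wx.
  have nh : nbhs (h x) (g @^-1` S) by apply: open_nbhs_nbhs; split => //=; rewrite -Ph.
  have := hc _ nh => /= nhx.
  apply: (filterS _ (filterI (open_nbhs_nbhs (conj oW Wx)) nhx)) => y [Wy Sy].
  by split; [exact: WU | rewrite /= Ph].
Qed.
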